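(* If $m$ is prime, then $\dim\mathcal{H}_{(m)}=\frac{(m-1)!-(m-1)}{m}+m-1$.
   Context: $\mathcal{H}_{(m)}$ is the quotient of the span in $\mathbb{C}[\mathbb{S}_m]$ of all $m$-cycles by the span of those generalized Vassiliev elements all of whose terms are $m$-cycles, where for $m\ge2$, $\gamma\in\mathbb{S}_{m-1}$, $q\in[m-1]\cup\{*\}$, $t\in\{0,\dots,m-1\}$, $\alpha_t\in\mathbb{S}_m$ is obtained by inserting a new point $x$ into the line $1<\dots<m-1$ in the gap between $t$ and $t+1$, relabeling in order, acting as $\gamma$ on old points except $q\mapsto x\mapsto\gamma(q)$ if $q\ne*$, $x$ fixed if $q=*$, and for a cycle $v$ of $\gamma$, $E(\gamma,q,v)=\sum_{j\in v}(\alpha_{j-1}-\alpha_j)$. *)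

(* Defs.v *)
From mathcomp Require Import all_boot all_order all_algebra all_fingroup all_field.
Set Implicit Arguments. Unset Strict Implicit. Unset Printing Implicit Defensive.
Import GRing.Theory.
Local Open Scope ring_scope.

(* Points {1,...,k} are encoded 0-based as 'I_k (label j <-> ordinal j-1).
   We take m = n.+1, so gamma : 'S_n = S_{m-1}, the old line is 1<...<m-1,
   and the new point x inserted in the gap between t and t+1 (t = 0..m-1)
   receives label t+1, i.e. ordinal t : 'I_m; old point i is relabelled
   lift t i (= i if i < t, i+1 otherwise).  q : option 'I_n, None = '*'. *)

Section Alpha.
Variables (n : nat) (gamma : 'S_n) (q : option 'I_n) (t : 'I_n.+1).

Definition alpha_fun (y : 'I_n.+1) : 'I_n.+1 :=
  match unlift t y with
  | None => if q is Some q0 then lift t (gamma q0) else t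
  | Some i => if q == Some i then t else lift t (gamma i)
  end.

Lemma alpha_fun_inj : injective alpha_fun.
Proof.
move=> y1 y2; rewrite /alpha_fun.
have nl j : (lift t j == t) = false by rewrite eq_sym (negbTE (neq_lift _ _)).
have nl' j : (t == lift t j) = false by rewrite (negbTE (neq_lift _ _)).
have li j k : (lift t (gamma j) == lift t (gamma k)) = (j == k).
  by rewrite (inj_eq (@lift_inj _ t)) (inj_eq (@perm_inj _ gamma)).
case: unliftP => [i1|] ->; case: unliftP => [i2|] -> //=;
  case: q => [q0|] //=; rewrite ?(inj_eq Some_inj).
  all: do ?[case: eqP => [?|?]]; subst => //; move/eqP; rewrite ?nl ?nl' ?li // => /eqP; try congruence.
Qed.


Definition alpha : 'S_n.+1 := perm alpha_fun_inj.
End Alpha.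

(* The group algebra C[S_k], realised as functions S_k -> algC
   (algC = MathComp's algebraically closed field of complex algebraic numbers). *)
Definition grpalg (k : nat) := {ffun 'S_k -> algC^o}.

Definition gelt (k : nat) (s : 'S_k) : grpalg k := [ffun s' => (s' == s)%:R].

Definition is_full_cycle (k : nat) (s : 'S_k) : bool := #|porbits s| == 1%N.

(* The generalized Vassiliev element E(gamma,q,v) = sum_{j in v} (alpha_{j-1} - alpha_j),
   for gamma in S_{m-1} (m = n.+1), q in [m-1] u {*}, v a cycle of gamma.
   With 0-based j : 'I_n (label j+1), alpha_{j} (label-1) has gap index
   widen_ord _ j (value j) and alpha_{j+1} has gap index lift ord0 j (value j+1). *)
Definition vass (n : nat) (gamma : 'S_n) (q : option 'I_n) (v : {set 'I_n})
  : grpalg n.+1 :=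
  \sum_(j in v) (gelt (alpha gamma q (widen_ord (leqnSn n) j))
                 - gelt (alpha gamma q (lift ord0 j))).

Definition vass_all_full (n : nat) (gamma : 'S_n) (q : option 'I_n)
  (v : {set 'I_n}) : bool :=
  [forall j in v, is_full_cycle (alpha gamma q (widen_ord (leqnSn n) j))
                  && is_full_cycle (alpha gamma q (lift ord0 j))].

Definition cycle_span (k : nat) : {vspace grpalg k} :=
  (\sum_(s : 'S_k | is_full_cycle s) <[gelt s]>)%VS.

Definition vass_span (n : nat) : {vspace grpalg n.+1} :=
  (\sum_(gamma : 'S_n) \sum_(q : option 'I_n)
     \sum_(v in porbits gamma | vass_all_full gamma q v) <[vass gamma q v]>)%VS.

(* dim H_(m) = dim (cycle_span / vass_span); vass_span is a subspace of
   cycle_span, so the quotient has dimension \dim cycle_span - \dim vass_span.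
   Only meaningful for m >= 2 (m = n.+1 with n >= 1); m = 0 is a dummy case. *)
Definition H_dim (m : nat) : nat :=
  match m with
  | 0 => 0
  | n.+1 => (\dim (cycle_span n.+1) - \dim (vass_span n))%N
  end.

(* Main.v *)
Require Import Defs.
From mathcomp Require Import all_boot all_order all_algebra all_fingroup all_field.
From mathcomp Require Import cyclic.
From mathcomp Require Import ring.
Set Implicit Arguments. Unset Strict Implicit. Unset Printing Implicit Defensive.
Import GRing.Theory.
Local Open Scope ring_scope.
Import Num.Theory.
Local Open Scope group_scope.



Lemma fullP k (s : 'S_k) (x0 : 'I_k) :
  reflect (forall x y, y \in porbit s x) (is_full_cycle s).
Proof.
rewrite /is_full_cycle; apply: (iffP idP).
  move=> /cards1P [A HA] x y.
  have hx : porbit s x \in porbits s by apply: imset_f.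
  have hy : porbit s y \in porbits s by apply: imset_f.
  rewrite HA !inE in hx hy.
  by rewrite (eqP hx) -(eqP hy) porbit_id.
move=> H; apply/cards1P; exists (porbit s x0); apply/setP => A; rewrite inE.
apply/imsetP/eqP => [[x _ ->]|->]; last by exists x0.
apply/setP => y; by rewrite !H.
Qed.

Lemma full_conj k (s r : 'S_k) : is_full_cycle s -> is_full_cycle (s ^ r).
Proof.
case: k s r => [|k] s r.
  rewrite /is_full_cycle => /eqP H; exfalso.
  have := leq_imset_card (porbit s) [set: 'I_0].
  rewrite cardsT card_ord.
  suff -> : porbit s @: [set: 'I_0] = porbits s by rewrite H.
  by apply/setP => A; rewrite /porbits; apply/imsetP/imsetP => [][x _ ->]; exists x.
move=> /(fullP s ord0) H; apply/(fullP _ ord0) => x y.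
have /porbitP [i Hi] := H (r^-1 x) (r^-1 y).
apply/porbitP; exists i.
by rewrite -conjXg -{1}[x](permKV r) permJ -Hi permKV.
Qed.

Lemma full_conjE k (s r : 'S_k) : is_full_cycle (s ^ r) = is_full_cycle s.
Proof.
apply/idP/idP; last exact: full_conj.
by move=> /(full_conj (r^-1)); rewrite conjgK.
Qed.

Lemma orbit_closed k (s : 'S_k) (P : {set 'I_k}) x :
  x \in P -> (forall y, y \in P -> s y \in P) -> porbit s x \subset P.
Proof.
move=> xP cl; apply/subsetP => y /porbitP [i ->].
elim: i => [|i IH]; first by rewrite expg0 perm1.
by rewrite expgSr permM; apply: cl.
Qed.
Section R.
Variable n : nat.

Definition r_fun (t : 'I_n.+1) (y : 'I_n.+1) : 'I_n.+1 :=
  match unlift ord_max y with None => t | Some i => lift t i end.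
Definition r_inv (t : 'I_n.+1) (y : 'I_n.+1) : 'I_n.+1 :=
  match unlift t y with None => ord_max | Some i => lift ord_max i end.
Lemma r_funK t : cancel (r_fun t) (r_inv t).
Proof.
move=> y; rewrite /r_fun /r_inv; case: (unliftP ord_max y) => [i ->|->].
  by rewrite liftK.
by rewrite unlift_none.
Qed.
Definition rperm t : 'S_n.+1 := perm (can_inj (r_funK t)).

Lemma rperm_max t : rperm t ord_max = t.
Proof. by rewrite permE /r_fun unlift_none. Qed.
Lemma rperm_lift t i : rperm t (lift ord_max i) = lift t i.
Proof. by rewrite permE /r_fun liftK. Qed.

Lemma alphaE (g : 'S_n) q t y : alpha g q t y = alpha_fun g q t y.
Proof. by rewrite permE. Qed.

Lemma alpha_conj (g : 'S_n) q t : alpha g q t = (alpha g q ord_max) ^ (rperm t).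
Proof.
apply/permP => z; rewrite -[z](permKV (rperm t)); set y := (rperm t)^-1 z.
rewrite permJ; clearbody y; clear z.
case: (unliftP ord_max y) => [i ->|->].
  rewrite rperm_lift !alphaE /alpha_fun !liftK.
  case: eqP => _; first by rewrite rperm_max.
  by rewrite rperm_lift.
rewrite rperm_max !alphaE /alpha_fun !unlift_none.
case: q => [q0|]; first by rewrite rperm_lift.
by rewrite rperm_max.
Qed.


Lemma porbit_step k (s : 'S_k) x y : y \in porbit s x -> s y \in porbit s x.
Proof. by move=> /porbitP [i ->]; rewrite -permM -expgSr mem_porbit. Qed.

Lemma alpha_full_orbit (g : 'S_n) q t : (0 < n)%N ->
  is_full_cycle (alpha g q t) -> exists q0, q = Some q0 /\ forall k, k \in porbit g q0.
Proof.
move=> n0 /(fullP _ t) F.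
case: q F => [q0|] F; last first.
  have := @orbit_closed _ (alpha g None t) [set t] t (set11 t).
  have cl : forall y, y \in [set t] -> alpha g None t y \in [set t].
    by move=> y; rewrite inE => /eqP ->; rewrite alphaE /alpha_fun unlift_none inE.
  move=> /(_ cl) /subsetP /(_ (lift t (Ordinal n0))) H.
  have := H (F _ _); rewrite inE => /eqP E.
  by have := neq_lift t (Ordinal n0); rewrite E eqxx.
exists q0; split => // k; apply/negPn/negP => kq.
pose S := lift t @: porbit g k.
have cl : forall y, y \in S -> alpha g (Some q0) t y \in S.
  move=> y /imsetP [k' k'k ->]; rewrite alphaE /alpha_fun liftK.
  case: eqP => [[E]|_].
    by move: kq; rewrite -E in k'k; rewrite porbit_sym k'k.
  by apply: imset_f; apply: porbit_step.
have := orbit_closed (imset_f (lift t) (porbit_id g k)) cl.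
move=> /subsetP /(_ t (F _ _)) /imsetP [k' _ E].
by have := neq_lift t k'; rewrite -E eqxx.
Qed.

Lemma alpha_full_of (g : 'S_n) q0 t : (forall k, k \in porbit g q0) ->
  is_full_cycle (alpha g (Some q0) t).
Proof.
move=> G; set a := alpha g (Some q0) t.
suff H : forall y, y \in porbit a t.
  apply/(fullP _ t) => x y.
  have E : porbit a x = porbit a t by apply/eqP; rewrite eq_porbit_mem.
  by rewrite E.
pose P := [set i | lift t i \in porbit a t].
have at_ : a t = lift t (g q0) by rewrite /a alphaE /alpha_fun unlift_none.
have cl : forall i, i \in P -> g i \in P.
  move=> i; rewrite !inE => Hi.
  case: (eqVneq i q0) => [->|ne].
    by rewrite -at_ porbit_step // porbit_id.
  have : a (lift t i) = lift t (g i).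
    by rewrite /a alphaE /alpha_fun liftK; case: eqP => // [[E]]; rewrite E eqxx in ne.
  by move <-; apply: porbit_step.
have g0 : g q0 \in P by rewrite inE -at_ porbit_step // porbit_id.
have /subsetP sub := orbit_closed g0 cl.
move=> y; case: (unliftP t y) => [i ->|->]; last exact: porbit_id.
have : i \in P by apply: sub; have := porbit_perm g 1 q0; rewrite expg1 => ->; apply: G.
by rewrite inE.
Qed.


Lemma full_moves (s : 'S_n.+1) x : (0 < n)%N -> is_full_cycle s -> s x != x.
Proof.
move=> n0 /(fullP _ x) F; apply/negP => /eqP sx.
have cl : forall y, y \in [set x] -> s y \in [set x].
  by move=> y; rewrite inE => /eqP ->; rewrite sx inE.
have /subsetP := orbit_closed (set11 x) cl.
have [y yx] : exists y, y != x.
  by exists (lift x (Ordinal n0)); rewrite eq_sym neq_lift.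
by move=> /(_ y (F _ _)); rewrite inE (negbTE yx).
Qed.

Section Build.
Variable tau : 'S_n.+1.
Hypothesis tfix : tau ord_max != ord_max.
Let a := tau^-1 ord_max.
Let b := tau ord_max.
Definition ffun_ (x : 'I_n.+1) := if x == a then b else tau x.
Lemma ffun_neq i : ffun_ (lift ord_max i) != ord_max.
Proof.
rewrite /ffun_; case: (lift ord_max i =P a) => [E|ne]; first exact: tfix.
apply/eqP => E; apply: ne; apply: (@perm_inj _ tau); by rewrite E /a permKV.
Qed.
Definition gfun (i : 'I_n) : 'I_n := odflt i (unlift ord_max (ffun_ (lift ord_max i))).
Lemma gfun_lift i : lift ord_max (gfun i) = ffun_ (lift ord_max i).
Proof.
rewrite /gfun; case: (unliftP ord_max (ffun_ (lift ord_max i))) => [j ->|E] //=.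
by have := ffun_neq i; rewrite E eqxx.
Qed.
Lemma gfun_inj : injective gfun.
Proof.
move=> i1 i2 E; have := congr1 (lift ord_max) E; rewrite !gfun_lift /ffun_.
have ax : forall i, lift ord_max i == a -> tau (lift ord_max i) = ord_max.
  by move=> i /eqP ->; rewrite /a permKV.
case: eqP => [E1|ne1]; case: eqP => [E2|ne2].
- by move: E1; rewrite -E2 => /lift_inj.
- move=> /esym /(congr1 tau^-1); rewrite /b !permK => E3.
  by have := neq_lift ord_max i2; rewrite E3 eqxx.
- move=> /(congr1 tau^-1); rewrite /b !permK => E3.
  by have := neq_lift ord_max i1; rewrite E3 eqxx.
- by move=> /perm_inj /lift_inj.
Qed.
Definition gperm : 'S_n := perm gfun_inj.

Lemma build_alpha : exists q0, alpha gperm (Some q0) ord_max = tau.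
Proof.
have an : a != ord_max.
  by apply: contra tfix => /eqP E; rewrite -{1}E /a permKV.
case: (unliftP ord_max a) => [q0 Eq|E]; last by rewrite E eqxx in an.
exists q0; apply/permP => y; rewrite alphaE /alpha_fun.
case: (unliftP ord_max y) => [i ->|->].
  case: eqP => [[<-]|ne].
    by rewrite -Eq /a permKV.
  rewrite permE gfun_lift /ffun_; case: eqP => // E.
  by move: E; rewrite Eq => /lift_inj E; rewrite E in ne.
by rewrite permE gfun_lift /ffun_ -Eq eqxx.
Qed.
End Build.

Lemma alpha_inj (g1 g2 : 'S_n) q1 q2 :
  alpha g1 (Some q1) ord_max = alpha g2 (Some q2) ord_max -> g1 = g2 /\ q1 = q2.
Proof.
move=> E.
have Ey : forall y, alpha g1 (Some q1) ord_max y = alpha g2 (Some q2) ord_max y.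
  by move=> y; rewrite E.
have Eq : q1 = q2.
  have := Ey (lift ord_max q1); rewrite !alphaE /alpha_fun liftK eqxx.
  case: eqP => [[->]|_] // /esym E'.
  by have := neq_lift ord_max (g2 q1); rewrite E' eqxx.
subst q2; split => //; apply/permP => i.
case: (eqVneq i q1) => [->|ne].
  have := Ey ord_max; rewrite !alphaE /alpha_fun unlift_none.
  by move=> /lift_inj.
have := Ey (lift ord_max i); rewrite !alphaE /alpha_fun liftK.
case: eqP => [[E']|_]; first by rewrite E' eqxx in ne.
by move=> /lift_inj.
Qed.

End R.

Lemma full_of_orbit k (g : 'S_k) q0 : (forall x, x \in porbit g q0) -> is_full_cycle g.
Proof.
move=> H; apply/(fullP _ q0) => x y.
have E : porbit g x = porbit g q0 by apply/eqP; rewrite eq_porbit_mem.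
by rewrite E.
Qed.

Definition Cset k := [set s : 'S_k | is_full_cycle s].

Lemma cardC n : #|Cset n.+1| = n`!.
Proof.
elim: n => [|n IH].
  rewrite (_ : Cset 1 = setT) ?cardsT ?card_Sn //.
  apply/setP => s; rewrite !inE; apply/(fullP _ ord0) => x y.
  by rewrite (ord1 y) (ord1 x) porbit_id.
pose F (p : 'S_n.+1 * 'I_n.+1) := alpha p.1 (Some p.2) ord_max.
have Finj : injective F.
  by move=> [g1 q1] [g2 q2]; rewrite /F /= => /alpha_inj [-> ->].
have -> : Cset n.+2 = F @: setX (Cset n.+1) setT.
  apply/setP => s; rewrite inE; apply/idP/imsetP.
    move=> sf; have tf := full_moves ord_max (ltn0Sn n) sf.
    have [q0 Hq] := build_alpha tf.
    exists (gperm tf, q0); last by rewrite /F Hq.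
    rewrite !inE andbT.
    have sf2 : is_full_cycle (alpha (gperm tf) (Some q0) ord_max) by rewrite Hq.
    have [q1 [[<-] H]] := alpha_full_orbit (ltn0Sn n) sf2.
    exact: full_of_orbit H.
  move=> [[g q0]]; rewrite !inE andbT /F /= => gf ->.
  by apply: alpha_full_of => k; move/(fullP _ q0): gf; apply.
by rewrite (card_imset _ Finj) cardsX cardsT card_ord IH factS mulnC.
Qed.

Section Vass.
Variable n : nat.
Definition cperm : 'S_n.+1 := rperm ord0.

Lemma vass_setT (g : 'S_n) q :
  vass g q [set: 'I_n] = (gelt (alpha g q ord0) - gelt (alpha g q ord_max))%R.
Proof.
pose F k := gelt (alpha g q (inord k)).
rewrite /vass (eq_bigl (fun j => true)); last by move=> j; rewrite inE.
transitivity (- \sum_(0 <= k < n) (F k.+1 - F k))%R.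
  rewrite big_mkord -sumrN; apply: eq_bigr => j _; rewrite opprB /F.
  congr (gelt (alpha _ _ _) - gelt (alpha _ _ _))%R; apply: val_inj => /=.
    by rewrite inordK // ltnS ltnW.
  by rewrite inordK ?ltnS // /bump add1n.
rewrite telescope_sumr // opprB /F; congr (gelt (alpha _ _ _) - gelt (alpha _ _ _))%R.
  by apply: val_inj; rewrite /= inordK.
by apply: val_inj; rewrite /= inordK.
Qed.

Definition Dspan : {vspace grpalg n.+1} :=
  (\sum_(s : 'S_n.+1 | is_full_cycle s) <[(gelt (s ^ cperm) - gelt s)%R]>)%VS.

Lemma vass_span_eq : (0 < n)%N -> vass_span n = Dspan.
Proof.
move=> n0; apply/eqP; rewrite eqEsubv; apply/andP; split.
  apply/subv_sumP => g _; apply/subv_sumP => q _; apply/subv_sumP => v /andP [vo vf].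
  have [i _ vi] := imsetP vo.
  have iv : i \in v by rewrite vi porbit_id.
  have := forallP vf i; rewrite iv /= => /andP [f1 _].
  have [q0 [qe H]] := alpha_full_orbit n0 f1.
  have vT : v = [set: 'I_n].
    apply/setP => k; rewrite inE vi.
    have -> : porbit g i = porbit g q0 by apply/eqP; rewrite eq_porbit_mem H.
    exact: H.
  rewrite vT vass_setT (alpha_conj g q ord0).
  apply: (sumv_sup (alpha g q ord_max)) => //.
  by rewrite qe; apply: alpha_full_of.
apply/subv_sumP => s sf.
have tf := full_moves ord_max n0 sf.
have [q0 Hq] := build_alpha tf.
set g := gperm tf in Hq.
have sf2 : is_full_cycle (alpha g (Some q0) ord_max) by rewrite Hq.
have [q1 [[<-] H]] := alpha_full_orbit n0 sf2.
have vo : [set: 'I_n] \in porbits g.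
  have -> : [set: 'I_n] = porbit g q0 by apply/setP => k; rewrite inE H.
  exact: imset_f.
apply: (sumv_sup g) => //; apply: (sumv_sup (Some q0)) => //.
apply: (sumv_sup [set: 'I_n]); first rewrite vo /=.
  by apply/forallP => j; apply/implyP => _; rewrite !alpha_full_of.
by rewrite vass_setT (alpha_conj g _ ord0) Hq.
Qed.
End Vass.
Section LA.
Variable k : nat.
Implicit Types (S : {set 'S_k}) (w : grpalg k).

Lemma geltE (s t : 'S_k) : gelt s t = (t == s)%:R.
Proof. by rewrite ffunE. Qed.

Lemma span_vanish S w y : w \in (\sum_(s in S) <[gelt s]>)%VS -> y \notin S -> w y = 0.
Proof.
move=> /memv_sumP [ws Hws ->] yS; rewrite sum_ffunE big1 // => s sS.
have /vlineP [c ->] := Hws s sS.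
rewrite ffunE geltE; case: eqP => [E|_]; last by rewrite scaler0.
by rewrite E sS in yS.
Qed.

Lemma gelt_neq0 (s : 'S_k) : gelt s != 0.
Proof.
apply/eqP => /ffunP /(_ s); rewrite geltE eqxx ffunE => /eqP.
by rewrite oner_eq0.
Qed.

Lemma dim_gelts S : \dim (\sum_(s in S) <[gelt s]>) = #|S|.
Proof.
move: {2}#|S| (erefl #|S|) => N; elim: N S => [|N IH] S cS.
  move/eqP: cS; rewrite cards_eq0 => /eqP ->.
  by rewrite big_pred0 ?dimv0 ?cards0 // => s; rewrite inE.
have [x xS] : exists x, x \in S.
  by apply/set0Pn; rewrite -card_gt0 cS.
rewrite (bigD1 x) //=.
rewrite (eq_bigl (fun s => s \in S :\ x)); last by move=> s; rewrite !inE andbC.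
have := dimv_sum_cap <[gelt x]> (\sum_(s in S :\ x) <[gelt s]>).
rewrite dim_vline gelt_neq0 IH; last by rewrite (cardsD1 x S) xS in cS; case: cS.
have -> : (<[gelt x]> :&: \sum_(s in S :\ x) <[gelt s]>)%VS = 0%VS.
  apply/eqP; rewrite -subv0; apply/subvP => w /memv_capP [w1 w2]; rewrite memv0.
  have /vlineP [c wc] := w1.
  have := span_vanish w2 (y := x); rewrite !inE eqxx /= => /(_ isT).
  rewrite wc ffunE geltE eqxx => /eqP; rewrite scaler_eq0 oner_eq0 orbF => /eqP ->.
  by rewrite scale0r.
by rewrite dimv0 addn0 add1n (cardsD1 x S) xS.
Qed.
End LA.

Lemma sum_eq_pred (T : finType) (A : {set T}) z :
  \sum_(y in A) ((y == z)%:R : algC^o) = (z \in A)%:R.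
Proof.
case: (boolP (z \in A)) => zA.
  rewrite (bigD1 z) //= eqxx big1 ?addr0 // => y /andP [_ /negbTE ->] //.
rewrite big1 // => y yA; case: eqP => // E; by rewrite -E yA in zA.
Qed.

Section Orb.
Variable n : nat.
Local Notation c := (cperm n).
Local Notation X := (<[cperm n]>%G : {group 'S_n.+1}).
Local Notation C := (Cset n.+1).
Local Notation orb s := (orbit 'J%act X s).
Local Notation O := (orbit 'J%act X @: C).
Local Notation R := [set repr o | o in O].
Local Notation W := (\sum_(s in C) <[gelt s]>)%VS.
Local Notation U := (\sum_(s in R) <[gelt s]>)%VS.
Local Notation D := (Dspan n).

Lemma acts_C : [acts X, on C | 'J%act].
Proof. by apply/actsP => a _ s; rewrite !inE /= full_conjE. Qed.

Lemma orbC s : s \in C -> orb s \subset C.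
Proof.
move=> sC; apply/subsetP => y /orbitP [a _ <-]; move: sC; by rewrite !inE /= full_conjE.
Qed.

Lemma reprO o : o \in O -> repr o \in o /\ orb (repr o) = o.
Proof.
move=> /imsetP [t _ ->]; have h : repr (orb t) \in orb t by apply: mem_repr (orbit_refl _ _ _).
split => //; exact/orbit_eqP.
Qed.

Lemma RsubC : R \subset C.
Proof.
apply/subsetP => _ /imsetP [o oO ->]; have [h _] := reprO oO.
move: oO h => /imsetP [t tC ->] h; exact: (subsetP (orbC tC)).
Qed.

Lemma cardR : #|R| = #|O|.
Proof.
apply: card_in_imset => o1 o2 h1 h2 E.
by have [_ <-] := reprO h1; have [_ <-] := reprO h2; rewrite E.
Qed.

Lemma geltD_C (s : 'S_n.+1) : s \in C -> (gelt (s ^ c) - gelt s)%R \in D.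
Proof.
by rewrite inE => sf; rewrite memvE; apply: (sumv_sup s).
Qed.

Lemma geltD_pow i (s : 'S_n.+1) : s \in C -> (gelt s - gelt (s ^ (c ^+ i)))%R \in D.
Proof.
move=> sC; elim: i => [|i IH]; first by rewrite expg0 conjg1 subrr mem0v.
have tC : s ^ (c ^+ i) \in C by move: sC; rewrite !inE full_conjE.
have -> : (gelt s - gelt (s ^ c ^+ i.+1) =
   (gelt s - gelt (s ^ c ^+ i)) - (gelt ((s ^ c ^+ i) ^ c) - gelt (s ^ c ^+ i)))%R.
  by rewrite expgSr conjgM opprB addrA subrK.
by apply: memvB => //; apply: geltD_C.
Qed.

Lemma D_orbsum w t : w \in D -> \sum_(y in orb t) w y = 0.
Proof.
move=> /memv_sumP [ws Hws ->].
rewrite (eq_bigr (fun y => \sum_(s | is_full_cycle s) ws s y)); last by move=> y _; rewrite sum_ffunE.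
rewrite exchange_big /= big1 // => s sf.
have /vlineP [k ->] := Hws s sf.
rewrite (eq_bigr (fun y => k *: ((y == (s ^ c)%g)%:R - (y == s)%:R)))%R; last first.
  by move=> y _; rewrite !ffunE.
rewrite -scaler_sumr sumrB !sum_eq_pred.
have -> : (s ^ c \in orb t) = (s \in orb t).
  by apply: orbit_transl; apply: (mem_orbit 'J%act s (cycle_id c)).
by rewrite subrr scaler0.
Qed.

Lemma W_eq : W = (D + U)%VS.
Proof.
apply/eqP; rewrite eqEsubv; apply/andP; split.
  apply/subv_sumP => s sC; rewrite -memvE.
  set r := repr (orb s).
  have rO : orb s \in O by apply: imset_f.
  have [ro _] := reprO rO.
  have -> : gelt s = ((gelt s - gelt r) + gelt r)%R by rewrite subrK.
  apply: memv_add.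
    move: ro => /orbitP [a /cycleP [i ->] E]; rewrite /r -E; exact: geltD_pow.
  by rewrite memvE; apply: (sumv_sup r) => //; apply: imset_f.
rewrite subv_add; apply/andP; split.
  apply/subv_sumP => s sf; rewrite -memvE; apply: memvB.
    by rewrite memvE; apply: (sumv_sup (s ^ c)) => //; rewrite inE full_conjE.
  by rewrite memvE; apply: (sumv_sup s) => //; rewrite inE.
by apply/subv_sumP => s sR; apply: (sumv_sup s) => //; apply: (subsetP RsubC).
Qed.

Lemma DU0 : (D :&: U)%VS = 0%VS.
Proof.
apply/eqP; rewrite -subv0; apply/subvP => w /memv_capP [wD wU]; rewrite memv0.
apply/eqP/ffunP => y; rewrite ffunE.
case: (boolP (y \in R)) => yR; last exact: span_vanish wU yR.
have := D_orbsum y wD; rewrite (bigD1 y) ?orbit_refl //= big1 ?addr0 //.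
move=> s /andP [sy sne]; apply: (span_vanish wU); apply/negP => sR.
have [o1 o1O Ey] := imsetP yR; have [o2 o2O Es] := imsetP sR.
have [_ E1] := reprO o1O; have [_ E2] := reprO o2O.
have : orb s = orb y by apply/orbit_eqP.
rewrite Es Ey E1 E2 => Eo; by rewrite Es Ey Eo eqxx in sne.
Qed.

Lemma dim_main : \dim W = (\dim D + #|O|)%N.
Proof.
have := dimv_sum_cap D U; rewrite -W_eq DU0 dimv0 addn0 !dim_gelts cardR => ->.
by [].
Qed.

End Orb.

Section Count.
Variable n : nat.
Local Notation c := (cperm n).
Local Notation X := (<[cperm n]>%G : {group 'S_n.+1}).
Local Notation C := (Cset n.+1).

Lemma cpow0 j : (j <= n)%N -> (c ^+ j) ord0 = inord j.
Proof.
elim: j => [|j IH] jn.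
  by rewrite expg0 perm1; apply: val_inj; rewrite /= inordK.
rewrite expgSr permM IH ?(ltnW jn) //.
have -> : (inord j : 'I_n.+1) = lift ord_max (Ordinal jn).
  by apply: val_inj; rewrite /= inordK ?ltnS ?(ltnW jn) // /bump leqNgt jn.
rewrite /cperm rperm_lift; apply: val_inj; rewrite /= inordK ?ltnS //.
Qed.

Lemma trans0 (y : 'I_n.+1) : (c ^+ y) ord0 = y.
Proof. by rewrite cpow0 ?inord_val // -ltnS. Qed.

Lemma cpow_comm i j x : (c ^+ i) ((c ^+ j) x) = (c ^+ j) ((c ^+ i) x).
Proof. by rewrite -!permM -!expgD addnC. Qed.

Lemma c_m : c ^+ n.+1 = 1.
Proof.
have h : (c ^+ n.+1) ord0 = ord0.
  rewrite expgSr permM cpow0 //.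
  have -> : (inord n : 'I_n.+1) = ord_max by apply: val_inj; rewrite /= inordK.
  by rewrite /cperm rperm_max.
apply/permP => y; have E := trans0 y; by rewrite perm1 -{1}E cpow_comm h E.
Qed.

Lemma c_neq1 : (0 < n)%N -> c != 1.
Proof.
move=> n0; apply/eqP => E.
have := cpow0 n0; rewrite expg1 E perm1 => /(congr1 val) /=.
by rewrite inordK.
Qed.

Hypothesis pm : prime n.+1.

Lemma n_gt0 : (0 < n)%N.
Proof. by have := prime_gt1 pm. Qed.

Lemma card_X : #|X| = n.+1.
Proof.
have h1 : #[c] != 1%N by rewrite order_eq1 c_neq1 // n_gt0.
have := elimT (prime_nt_dvdP pm h1); rewrite order_dvdn c_m eqxx => /(_ isT).
by [].
Qed.

Lemma gen_X a : a \in X -> a != 1 -> <[a]> = X.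
Proof.
move=> aX a1; apply/eqP; rewrite eqEcard cycle_subG aX /= card_X.
have : (#|<[a]>| %| #|X|)%N by apply: cardSg; rewrite cycle_subG.
rewrite card_X => /(prime_nt_dvdP pm) ->; first by [].
by rewrite -/(#[a]) order_eq1.
Qed.

Lemma commute_c_X s : commute s c -> s \in X.
Proof.
move=> cs; apply/cycleP; exists (s ord0); apply/permP => y.
rewrite -(trans0 y) -permM.
have csy : commute s (c ^+ y) by apply: commuteX.
by rewrite -csy permM -{1}(trans0 (s ord0)) cpow_comm.
Qed.

Lemma X_full s : s \in X -> s != 1 -> is_full_cycle s.
Proof.
move=> sX s1; apply/(fullP _ ord0) => x y.
have /cycleP [i0 ci] : c \in <[s]> by rewrite gen_X ?cycle_id.
have E : y = (c ^+ (y + (n.+1 - x))) x.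
  rewrite -{2}(trans0 x) -permM -expgD.
  have -> : (x + (y + (n.+1 - x)) = y + n.+1)%N.
    by rewrite addnC -addnA subnK // ltnW.
  by rewrite expgD permM c_m perm1 trans0.
by apply/porbitP; exists (i0 * (y + (n.+1 - x)))%N; rewrite expgM -ci.
Qed.

Lemma Fix1 : 'Fix_(C | 'J)[1] = C.
Proof. by apply/setP => s; rewrite inE; case: (s \in C) => //=; apply/afix1P; rewrite /= conjg1. Qed.

Lemma Fixa a : a \in X -> a != 1 -> 'Fix_(C | 'J)[a] = X :\ 1.
Proof.
move=> aX a1; apply/setP => s; rewrite in_setI in_setD1 [s \in C]inE; apply/andP/andP.
  move=> [sf /afix1P /= fx].
  have csa : commute s a by rewrite /commute conjgC fx.
  have /cycleP [i ci] : c \in <[a]> by rewrite gen_X ?cycle_id.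
  split; last by apply: commute_c_X; rewrite ci; apply: commuteX.
  apply/eqP => E; have := full_moves ord0 n_gt0 sf; by rewrite E perm1 eqxx.
move=> [s1 sX]; split; first exact: X_full.
apply/afix1P => /=.
move: sX aX => /cycleP [i ->] /cycleP [j ->].
have cij : commute (c ^+ i) (c ^+ j) by apply: commuteX2.
by rewrite conjgE cij mulKg.
Qed.

Lemma card_X1 : #|X :\ 1| = n.
Proof. by have := cardsD1 1 X; rewrite group1 card_X add1n => [[<-]]. Qed.

Lemma orbit_count :
  (#|orbit 'J%act X @: C| * n.+1 = n`! + n * n)%N.
Proof.
have := Frobenius_Cauchy (acts_C n); rewrite card_X => <-.
rewrite (bigD1 1) ?group1 //= Fix1 cardC; congr (_ + _)%N.
rewrite (eq_bigr (fun _ => n)); last by move=> a /andP [aX a1]; rewrite Fixa // card_X1.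
rewrite (eq_bigl (fun a => a \in X :\ 1)); last by move=> a; rewrite !inE andbC.
by rewrite sum_nat_const card_X1.
Qed.
End Count.

Local Close Scope group_scope.
Local Open Scope ring_scope.
Import Num.Theory.

Theorem mainTheorem19 (m : nat) (hm : prime m) :
  (H_dim m)%:R = (((m - 1)`!)%:R - (m - 1)%:R) / m%:R + (m - 1)%:R :> rat.
Proof.
move: hm; case: m => [//|n] pm.
have n0 := n_gt0 pm.
rewrite /H_dim.
have EW : cycle_span n.+1 = (\sum_(s in Cset n.+1) <[gelt s]>)%VS.
  by rewrite /cycle_span; apply: eq_bigl => s; rewrite inE.
rewrite EW vass_span_eq // dim_main addKn subn1 /=.
have hO := orbit_count pm.
have h : (#|orbit 'J%act (<[cperm n]>%G : {group 'S_n.+1}) @: Cset n.+1|%:R * n.+1%:R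
          = n`!%:R + n%:R * n%:R :> rat).
  by rewrite -!natrM -natrD hO.
apply: (mulIf (x := n.+1%:R)); first by rewrite pnatr_eq0.
rewrite h mulrDl divfK ?pnatr_eq0 //.
rewrite -addn1 natrD; ring.
Qed.
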